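(* Let $n\ge3$, let $[\mathcal H:\partial]$, $[\mathcal G:\delta]$ be reduced $n$-crossed complexes and $([\mathcal E:\eta],p,f,\alpha,\beta)$ an $n$-butterfly from $\mathcal H$ to $\mathcal G$. If $[\mathcal Q:\xi]$ is a cofibrant replacement of $\mathcal H$ via a trivial fibration $q:\mathcal Q\to\mathcal H$, then there exists a weak equivalence $l:\mathcal Q\to\mathcal E^*$ with $p^*\circ l=q$.
   Context: A reduced $m$-crossed complex $[C:\partial]$ is a sequence of groups and homomorphisms $C_m\xrightarrow{\partial_m}\cdots\xrightarrow{\partial_2}C_1$ with an action of $C_1$ on each $C_k$ ($k\ge2$), such that $\partial_2$ is a crossed module, $C_k$ is abelian for $k\ge3$, each $\partial_k$ is $C_1$-equivariant, $\partial_{k-1}\partial_k$ is trivial, and $\partial_2(C_2)$ acts trivially on $C_k$ for $k\ge3$; morphisms commute with differentials and actions. $C_{\le m-1}$ is the truncation dropping degree $m$. The category of reduced $n$-crossed complexes carries a model structure in which weak equivalences are morphisms inducing isomorphisms on $\pi_1=C_1/\operatorname{im}\partial_2$, $\pi_k=\ker\partial_k/\operatorname{im}\partial_{k+1}$ ($2\le k\le n-1$), $\pi_n=\ker\partial_n$, and fibrations are degreewise surjections; cofibrant objects are those with the left lifting property against trivial fibrations, and a cofibrant replacement of $\mathcal H$ is a cofibrant $\mathcal Q$ with a trivial fibration $\mathcal Q\to\mathcal H$. An $n$-butterfly $([\mathcal E:\eta],p,f,\alpha,\beta)$ from $[\mathcal H:\partial]$ to $[\mathcal G:\delta]$ consists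 of a reduced $(n-1)$-crossed complex $[\mathcal E:\eta]$, morphisms $p:\mathcal E\to\mathcal H_{\le n-1}$, $f:\mathcal E\to\mathcal G_{\le n-1}$, and homomorphisms $\alpha:\mathcal H_n\to\mathcal E_{n-1}$, $\beta:\mathcal G_n\to\mathcal E_{n-1}$ with $p_{n-1}\alpha=\partial_n$, $f_{n-1}\beta=\delta_n$, such that: (B2) $1\to\mathcal G_n\xrightarrow{\beta}\mathcal E_{n-1}\xrightarrow{u_{n-1}}\ker\eta_{n-2}\times_{\ker\partial_{n-2}}\mathcal H_{n-1}\to1$ is exact and $u_k:\mathcal E_k\to\ker\eta_{k-1}\times_{\ker\partial_{k-1}}\mathcal H_k$ is surjective for $k\le n-2$, where $u_k(x)=(\eta_k(x),p_k(x))$, the target being the fibre product of $p_{k-1}:\ker\eta_{k-1}\to\ker\partial_{k-1}$ and $\partial_k$ (conventions $\ker\eta_0=\ker\partial_0=1$, $\ker\eta_1=\mathcal E_1$, $\ker\partial_1=\mathcal H_1$); (B3) $\eta_{n-1}\circ(\alpha\times\beta)$ and $f_{n-1}\circ\alpha$ are trivial, $(\alpha\times\beta)(x,y)=\alpha(x)\beta(y)$; (B4) $\alpha(x^{p_1(a)})=\alpha(x)^a$, $\beta(y^{f_1(a)})=\beta(y)^a$ for $a\in\mathcal E_1$. Then $[\mathcal E^*:\eta^*]$: $\mathcal H_n\times\mathcal G_n\xrightarrow{\alpha\times\beta}\mathcal E_{n-1}\xrightarrow{\eta_{n-1}}\cdots\to\mathcal E_1$ is a reduced $n$-crossed complex and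 $p^*:\mathcal E^*\to\mathcal H$ is the projection in degree $n$ and $p$ below. *)

(* Defs.v *)
From mathcomp Require Import all_boot.

Unset Printing Implicit Defensive.

Record group := Group {
  gcar :> Type;
  gmul : gcar -> gcar -> gcar;
  gone : gcar;
  ginv : gcar -> gcar;
  gmulA : forall x y z, gmul x (gmul y z) = gmul (gmul x y) z;
  gmul1g : forall x, gmul gone x = x;
  gmulVg : forall x, gmul (ginv x) x = gone }.

Arguments gmul {g} x y.
Arguments gone {g}.
Arguments ginv {g} x.

Infix "*g" := gmul (at level 40, left associativity).

Definition hom {A B : group} (h : A -> B) : Prop :=
  forall x y, h (x *g y) = h x *g h y.

Definition prodg_mul {A B : group} (x y : (A * B)%type) : (A * B)%type :=
  (x.1 *g y.1, x.2 *g y.2).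

Lemma prodg_mulA (A B : group) (x y z : (A * B)%type) :
  prodg_mul x (prodg_mul y z) = prodg_mul (prodg_mul x y) z.
Proof. by rewrite /prodg_mul /= !gmulA. Qed.

Lemma prodg_mul1 (A B : group) (x : (A * B)%type) :
  prodg_mul (gone, gone) x = x.
Proof. by case: x => a b; rewrite /prodg_mul /= !gmul1g. Qed.

Lemma prodg_mulV (A B : group) (x : (A * B)%type) :
  prodg_mul (ginv x.1, ginv x.2) x = (gone, gone).
Proof. by case: x => a b; rewrite /prodg_mul /= !gmulVg. Qed.

Definition prodg (A B : group) : group :=
  @Group (A * B)%type (@prodg_mul A B) (gone, gone)
         (fun x => (ginv x.1, ginv x.2))
         (@prodg_mulA A B) (@prodg_mul1 A B) (@prodg_mulV A B).

(*   CC k      = the group C_k (only degrees 1 <= k <= n matter)       *)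
(*   dd k      = the differential  partial_{k+1} : C_{k+1} -> C_k      *)
(*   act k x a = the right action x^a of a in C_1 on x in C_k (k>=2)   *)

Record cdata := CData {
  CC : nat -> group;
  dd : forall k, CC k.+1 -> CC k;
  act : forall k, CC k -> CC 1 -> CC k }.

Arguments dd {c k} x.
Arguments act {c k} x a.

Definition is_rcc (n : nat) (C : cdata) : Prop :=
  (forall k, 1 <= k < n -> hom (@dd C k)) /\
  (forall k, 2 <= k <= n ->
     (forall x, act x gone = x :> CC C k) /\
     (forall x a b, act (act x a) b = act x (a *g b) :> CC C k) /\
     (forall x y a, act (x *g y) a = act x a *g act y a :> CC C k)) /\
  (2 <= n ->
     (forall (x : CC C 2) a, dd (act x a) = ginv a *g dd x *g a) /\
     (forall (x y : CC C 2), act x (dd y) = ginv y *g x *g y)) /\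
  (forall k, 3 <= k <= n -> forall x y : CC C k, x *g y = y *g x) /\
  (forall k, 2 <= k < n -> forall (x : CC C k.+1) a,
      dd (act x a) = act (dd x) a) /\
  (forall k, 1 <= k -> k.+2 <= n -> forall x : CC C k.+2,
      dd (dd x) = gone) /\
  (forall k, 3 <= k <= n -> forall (x : CC C k) (y : CC C 2),
      act x (dd y) = x).

Definition cmap (C D : cdata) := forall k, CC C k -> CC D k.

Definition is_morph (n : nat) (C D : cdata) (h : cmap C D) : Prop :=
  (forall k, 1 <= k <= n -> hom (h k)) /\
  (forall k, 1 <= k < n -> forall x : CC C k.+1, h k (dd x) = dd (h k.+1 x)) /\
  (forall k, 2 <= k <= n -> forall (x : CC C k) a,
      h k (act x a) = act (h k x) (h 1 a)).

(* h induces isomorphisms on pi_1 = C_1/im d_2,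
   pi_k = ker d_k / im d_{k+1} (2 <= k <= n-1), pi_n = ker d_n
   (bijectivity of the induced homomorphisms, written out). *)
Definition pi_iso (n : nat) (C D : cdata) (h : cmap C D) : Prop :=
  ((forall y : CC D 1, exists (x : CC C 1) (z : CC D 2), h 1 x = y *g dd z) /\
   (forall x : CC C 1, (exists z : CC D 2, h 1 x = dd z) ->
                       exists w : CC C 2, x = dd w)) /\
  (forall j, 1 <= j -> j.+2 <= n ->
     (forall x : CC C j.+1, dd x = gone ->
        (exists z : CC D j.+2, h j.+1 x = dd z) ->
        exists w : CC C j.+2, x = dd w) /\
     (forall y : CC D j.+1, dd y = gone ->
        exists x : CC C j.+1, dd x = gone /\
          exists z : CC D j.+2, h j.+1 x = y *g dd z)) /\
  (forall j, j.+1 = n ->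
     (forall x : CC C j.+1, dd x = gone -> h j.+1 x = gone -> x = gone) /\
     (forall y : CC D j.+1, dd y = gone ->
        exists x : CC C j.+1, dd x = gone /\ h j.+1 x = y)).

Definition weak_equiv (n : nat) (C D : cdata) (h : cmap C D) : Prop :=
  is_morph n C D h /\ pi_iso n C D h.

Definition fibration (n : nat) (C D : cdata) (h : cmap C D) : Prop :=
  is_morph n C D h /\
  (forall k, 1 <= k <= n -> forall y : CC D k, exists x, h k x = y).

Definition trivial_fibration (n : nat) (C D : cdata) (h : cmap C D) : Prop :=
  fibration n C D h /\ weak_equiv n C D h.

(* cofibrant: left lifting property against all trivial fibrations
   (i.e. the morphism from the initial object has the LLP). *)
Definition cofibrant (n : nat) (Q : cdata) : Prop :=
  forall X Y : cdata, is_rcc n X -> is_rcc n Y ->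
  forall t : cmap X Y, trivial_fibration n X Y t ->
  forall g : cmap Q Y, is_morph n Q Y g ->
  exists h : cmap Q X, is_morph n Q X h /\
    (forall k, 1 <= k <= n -> forall x : CC Q k, t k (h k x) = g k x).

(* surjectivity of u_k : E_k -> ker eta_{k-1} x_{ker d_{k-1}} H_k,
   u_k(x) = (eta_k x, p_k x); conventions ker eta_1 = E_1,
   ker eta_0 = ker d_0 = 1, ker d_1 = H_1. *)
Definition u_surj (E H : cdata) (p : cmap E H) (k : nat) : Prop :=
  match k with
  | 0 => True
  | 1 => forall h : CC H 1, exists x : CC E 1, p 1 x = h
  | i.+2 => forall (e : CC E i.+1) (h : CC H i.+2),
      (0 < i -> dd e = gone) -> p i.+1 e = dd h ->
      exists x : CC E i.+2, dd x = e /\ p i.+2 x = h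
  end.

(* n-butterfly with n = m+2 *)
Definition butterfly_aux (m : nat) (H G E : cdata) (p : cmap E H) (f : cmap E G)
    (alpha : CC H m.+2 -> CC E m.+1) (beta : CC G m.+2 -> CC E m.+1) : Prop :=
  is_rcc m.+1 E /\ is_morph m.+1 E H p /\ is_morph m.+1 E G f /\
  hom alpha /\ hom beta /\
  (forall h, p m.+1 (alpha h) = dd h) /\
  (forall g, f m.+1 (beta g) = dd g) /\
  ((forall g, beta g = gone -> g = gone) /\
   (forall g, dd (beta g) = gone /\ p m.+1 (beta g) = gone) /\
   (forall x : CC E m.+1, dd x = gone -> p m.+1 x = gone ->
       exists g, x = beta g) /\
   u_surj E H p m.+1 /\
   (forall k, 1 <= k <= m -> u_surj E H p k)) /\
  (forall h g, dd (alpha h *g beta g) = gone) /\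
  (forall h, f m.+1 (alpha h) = gone) /\
  (forall h a, alpha (act h (p 1 a)) = act (alpha h) a) /\
  (forall g a, beta (act g (f 1 a)) = act (beta g) a).

Definition butterfly (n : nat) (H G E : cdata) (p : cmap E H) (f : cmap E G)
    (alpha : CC H n -> CC E n.-1) (beta : CC G n -> CC E n.-1) : Prop :=
  match n as n0 return (CC H n0 -> CC E n0.-1) -> (CC G n0 -> CC E n0.-1) -> Prop with
  | m.+2 => fun a b => butterfly_aux m H G E p f a b
  | _ => fun _ _ => False
  end alpha beta.

Definition tcast (F : nat -> group) (i j : nat) (e : i = j) (x : F i) : F j :=
  eq_rect i (fun k => gcar (F k)) x j e.

Definition rtb (n k : nat) : bool := (1 < k) && (k == n).

Lemma rt_eq (n k : nat) : rtb n k = true -> n = k.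
Proof. by case/andP=> _ /eqP ->. Qed.

Lemma rt_top (n k : nat) : rtb n k.+1 = true -> n.-1 = k.
Proof. by move/rt_eq->. Qed.

(* carrier: T in degree n, C_k otherwise (degree 1 is definitionally C_1) *)
Definition rcar (n : nat) (C : cdata) (T : group) (k : nat) : group :=
  if rtb n k then T else CC C k.

Definition rd (n : nat) (C : cdata) (T : group) (t : T -> CC C n.-1) (k : nat) :
    rcar n C T k.+1 -> rcar n C T k :=
  match rtb n k.+1 as c
        return rtb n k.+1 = c -> (if c then T else CC C k.+1) -> rcar n C T k with
  | true => fun e x =>
      match rtb n k as c0 return (if c0 then T else CC C k) with
      | true => x
      | false => tcast (CC C) _ _ (rt_top n k e) (t x)
      end
  | false => fun _ x =>
      match rtb n k as c0 return (if c0 then T else CC C k) with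
      | true => gone
      | false => dd x
      end
  end (erefl _).

Definition ract (n : nat) (C : cdata) (T : group) (tact : T -> CC C 1 -> T)
    (k : nat) (x : rcar n C T k) (a : CC C 1) : rcar n C T k :=
  (match rtb n k as c return (if c then T else CC C k) -> (if c then T else CC C k) with
   | true => fun y => tact y a
   | false => fun y => act y a
   end) x.

Definition replace_top (n : nat) (C : cdata) (T : group) (t : T -> CC C n.-1)
    (tact : T -> CC C 1 -> T) : cdata :=
  @CData (rcar n C T) (rd n C T t) (ract n C T tact).

Definition rmap (n : nat) (C D : cdata) (T : group) (proj : T -> CC D n)
    (p : cmap C D) (k : nat) : rcar n C T k -> CC D k :=
  match rtb n k as c return rtb n k = c -> (if c then T else CC C k) -> CC D k with
  | true => fun e x => tcast (CC D) _ _ (rt_eq n k e) (proj x)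
  | false => fun _ x => p k x
  end (erefl _).

(* E^* : H_n x G_n --(alpha x beta)--> E_{n-1} --> ... --> E_1,
   with E_1 acting on H_n x G_n through p_1 and f_1. *)
Definition Estar (n : nat) (H G E : cdata) (p : cmap E H) (f : cmap E G)
    (alpha : CC H n -> CC E n.-1) (beta : CC G n -> CC E n.-1) : cdata :=
  replace_top n E (prodg (CC H n) (CC G n))
    (fun x => alpha x.1 *g beta x.2)
    (fun x a => (act x.1 (p 1 a), act x.2 (f 1 a))).

Definition pstar (n : nat) (H G E : cdata) (p : cmap E H) (f : cmap E G)
    (alpha : CC H n -> CC E n.-1) (beta : CC G n -> CC E n.-1) :
    cmap (Estar n H G E p f alpha beta) H :=
  rmap n E H (prodg (CC H n) (CC G n)) (fun x => x.1) p.

(* Main.v *)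
Require Import Defs.
From mathcomp Require Import all_boot zify.
Arguments gmul1g {g} x.
Arguments gmulVg {g} x.
Arguments gmulA {g} x y z.

Section GL.
Variable (A : group).
Implicit Types x y z : A.
Lemma mulgV' x : x *g ginv x = gone.
Proof.
have h : ginv (ginv x) *g ginv x = gone by rewrite gmulVg.
rewrite -(gmul1g (x *g ginv x)) -h -!gmulA (gmulA (ginv x) x) gmulVg gmul1g.
by rewrite gmulVg.
Qed.
Lemma mulg1' x : x *g gone = x.
Proof. by rewrite -(gmulVg x) gmulA mulgV' gmul1g. Qed.
Lemma mulKg' x y : ginv x *g (x *g y) = y.
Proof. by rewrite gmulA gmulVg gmul1g. Qed.
Lemma mulKVg' x y : x *g (ginv x *g y) = y.
Proof. by rewrite gmulA mulgV' gmul1g. Qed.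
Lemma mulg_inv_uniq x y : x *g y = gone -> x = ginv y.
Proof. by move=> h; rewrite -(mulg1' x) -(mulgV' y) gmulA h gmul1g. Qed.
Lemma mulgI x y z : x *g y = x *g z -> y = z.
Proof. by move=> h; rewrite -(mulKg' x y) h mulKg'. Qed.
Lemma invg1' : ginv (gone : A) = gone.
Proof. by rewrite -(mulg1' (ginv gone)) gmulVg. Qed.
Lemma invgM' x y : ginv (x *g y) = ginv y *g ginv x.
Proof.
symmetry; apply: mulg_inv_uniq.
by rewrite -gmulA (gmulA (ginv x)) gmulVg gmul1g gmulVg.
Qed.
Lemma invgK' x : ginv (ginv x) = x.
Proof. by symmetry; apply: mulg_inv_uniq; rewrite mulgV'. Qed.
End GL.

Lemma hom1 (A B : group) (h : A -> B) : hom h -> h gone = gone.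
Proof.
move=> hh; apply: (@mulgI _ (h gone)); by rewrite -hh gmul1g mulg1'.
Qed.
Lemma homV (A B : group) (h : A -> B) : hom h -> forall x, h (ginv x) = ginv (h x).
Proof.
move=> hh x; apply: mulg_inv_uniq; by rewrite -hh gmulVg hom1.
Qed.

Definition castI (b : bool) (Y X : group) (e : b = false) (x : X) : gcar (if b then Y else X) :=
  match esym e in _ = c return gcar (if c then Y else X) with erefl => x end.
Definition castO (b : bool) (Y X : group) (e : b = false) (y : gcar (if b then Y else X)) : gcar X :=
  match e in _ = c return gcar (if c then Y else X) with erefl => y end.
Definition castT (b : bool) (Y X : group) (e : b = true) (x : Y) : gcar (if b then Y else X) :=
  match esym e in _ = c return gcar (if c then Y else X) with erefl => x end.
Definition castTO (b : bool) (Y X : group) (e : b = true) (y : gcar (if b then Y else X)) : gcar Y :=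
  match e in _ = c return gcar (if c then Y else X) with erefl => y end.
Arguments castI {b Y X} e x.
Arguments castO {b Y X} e y.
Arguments castT {b Y X} e x.
Arguments castTO {b Y X} e y.

Lemma castIO b Y X (e : b = false) y : castI (Y:=Y) (X:=X) e (castO e y) = y.
Proof. by move: e y; case: b => // e; rewrite (eq_axiomK e). Qed.
Lemma castTOK b Y X (e : b = true) y : castT (Y:=Y) (X:=X) e (castTO e y) = y.
Proof. by move: e y; case: b => // e; rewrite (eq_axiomK e). Qed.
Lemma castI_inj b Y X (e : b = false) x y : castI (Y:=Y) (X:=X) e x = castI e y -> x = y.
Proof. by move: e; case: b => // e; rewrite (eq_axiomK e). Qed.
Lemma castT_inj b Y X (e : b = true) x y : castT (Y:=Y) (X:=X) e x = castT e y -> x = y.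
Proof. by move: e; case: b => // e; rewrite (eq_axiomK e). Qed.
Lemma castI_mul b Y X (e : b = false) x y :
  castI (Y:=Y) (X:=X) e (x *g y) = castI e x *g castI e y.
Proof. by move: e; case: b => // e; rewrite (eq_axiomK e). Qed.
Lemma castT_mul b Y X (e : b = true) x y :
  castT (Y:=Y) (X:=X) e (x *g y) = castT e x *g castT e y.
Proof. by move: e; case: b => // e; rewrite (eq_axiomK e). Qed.
Lemma castI_one b Y X (e : b = false) : castI (Y:=Y) (X:=X) e gone = gone.
Proof. by move: e; case: b => // e; rewrite (eq_axiomK e). Qed.
Lemma castT_one b Y X (e : b = true) : castT (Y:=Y) (X:=X) e gone = gone.
Proof. by move: e; case: b => // e; rewrite (eq_axiomK e). Qed.
Lemma castI_inv b Y X (e : b = false) x : castI (Y:=Y) (X:=X) e (ginv x) = ginv (castI e x).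
Proof. by move: e; case: b => // e; rewrite (eq_axiomK e). Qed.
Lemma castI_ff Y X (e : false = false) x : castI (Y:=Y) (X:=X) e x = x.
Proof. by rewrite (eq_axiomK e). Qed.
Lemma castI_all b Y X (e : b = false) (P : gcar (if b then Y else X) -> Prop) :
  (forall x, P (castI e x)) -> forall y, P y.
Proof. by move=> h y; rewrite -(@castIO _ _ _ e y). Qed.
Lemma castT_all b Y X (e : b = true) (P : gcar (if b then Y else X) -> Prop) :
  (forall x, P (castT e x)) -> forall y, P y.
Proof. by move=> h y; rewrite -(@castTOK _ _ _ e y). Qed.

Definition rdb (n : nat) (C : cdata) (T : group) (t : T -> CC C n.-1) (k : nat) b
  (e : rtb n k.+1 = b) : (if b then T else CC C k.+1) -> rcar n C T k :=
  match b as c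
        return rtb n k.+1 = c -> (if c then T else CC C k.+1) -> rcar n C T k with
  | true => fun e x =>
      match rtb n k as c0 return (if c0 then T else CC C k) with
      | true => x
      | false => Defs.tcast (CC C) _ _ (rt_top n k e) (t x)
      end
  | false => fun _ x =>
      match rtb n k as c0 return (if c0 then T else CC C k) with
      | true => gone
      | false => dd x
      end
  end e.
Arguments rdb n C T t k {b} e _.

Lemma rdb_low n C T t k b (e : rtb n k.+1 = b) (hb : b = false) (e0 : rtb n k = false) x :
  rdb n C T t k e (castI hb x) = castI e0 (dd x).
Proof.
move: e hb; case: b => // e hb; rewrite (eq_axiomK hb) /=.
move: e0; rewrite /rcar; case: (rtb n k) => // e0.
by rewrite (eq_axiomK e0).
Qed.

Lemma rd_low n C T t k (e1 : rtb n k.+1 = false) (e0 : rtb n k = false) x :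
  rd n C T t k (castI e1 x) = castI e0 (dd x).
Proof. exact: (@rdb_low n C T t k _ (erefl _) e1 e0 x). Qed.

Lemma rdb_top n C T t k b (e : rtb n k.+1 = b) (hb : b = true) (e0 : rtb n k = false)
   (pr : n.-1 = k) y :
  rdb n C T t k e (castT hb y) = castI e0 (Defs.tcast (CC C) _ _ pr (t y)).
Proof.
move: e hb; case: b => // e hb; rewrite (eq_axiomK hb) /=.
move: e0; rewrite /rcar; case: (rtb n k) => // e0.
by rewrite (eq_axiomK e0) (eq_irrelevance (rt_top n k e) pr).
Qed.

Lemma rd_top m C T t (e1 : rtb m.+2 m.+2 = true) (e0 : rtb m.+2 m.+1 = false) y :
  rd m.+2 C T t m.+1 (castT e1 y) = castI e0 (t y).
Proof. exact: (@rdb_top m.+2 C T t m.+1 _ (erefl _) e1 e0 (erefl _) y). Qed.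

Lemma ract_low n C T tact k (e : rtb n k = false) x a :
  ract n C T tact k (castI e x) a = castI e (act x a).
Proof. rewrite /ract; move: e; rewrite /rcar; case: (rtb n k) => // e.
by rewrite (eq_axiomK e). Qed.

Lemma ract_top n C T tact k (e : rtb n k = true) x a :
  ract n C T tact k (castT e x) a = castT e (tact x a).
Proof. rewrite /ract; move: e; rewrite /rcar; case: (rtb n k) => // e.
by rewrite (eq_axiomK e). Qed.

Definition rmapb (n : nat) (C D : cdata) (T : group) (proj : T -> CC D n)
    (p : cmap C D) (k : nat) b (e : rtb n k = b) : (if b then T else CC C k) -> CC D k :=
  match b as c return rtb n k = c -> (if c then T else CC C k) -> CC D k with
  | true => fun e x => Defs.tcast (CC D) _ _ (rt_eq n k e) (proj x)
  | false => fun _ x => p k x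
  end e.
Arguments rmapb n C D T proj p k {b} e _.

Lemma rmap_low n C D T proj p k (e : rtb n k = false) x :
  rmap n C D T proj p k (castI e x) = p k x.
Proof.
have : forall b (e' : rtb n k = b) (hb : b = false),
  rmapb n C D T proj p k e' (castI hb x) = p k x by move=> b; case: b => // e' hb; rewrite (eq_axiomK hb).
by move/(_ _ (erefl _) e).
Qed.

Lemma rmap_top n C D T proj p (e : rtb n n = true) x :
  rmap n C D T proj p n (castT e x) = proj x.
Proof.
have : forall b (e' : rtb n n = b) (hb : b = true),
  rmapb n C D T proj p n e' (castT hb x) = proj x.
  by move=> b; case: b => // e' hb; rewrite (eq_axiomK hb) /= (eq_axiomK (rt_eq n n e')).
by move/(_ _ (erefl _) e).
Qed.
Arguments hom1 {A B h} _.
Arguments homV {A B h} _ x.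
Arguments castI_all {b Y X} e {P} _ y.
Arguments castT_all {b Y X} e {P} _ y.

Lemma two_of_three n (hn : 2 <= n) (Q X Y : cdata) (hX : is_rcc n X)
  (l : cmap Q X) (pp : cmap X Y) (q : cmap Q Y) :
  is_morph n Q X l -> is_morph n X Y pp -> pi_iso n X Y pp -> pi_iso n Q Y q ->
  (forall k, 1 <= k <= n -> forall x, pp k (l k x) = q k x) -> pi_iso n Q X l.
Proof.
move=> [lh [ld la]] [ph [pd pa]] [[p1s p1i] [pks pn]] [[q1s q1i] [qks qn]] comp.
have [hdd _] := hX.
split; [split|split].
- move=> y. have [x [z hz]] := q1s (pp 1 y).
  have pw : pp 1 (ginv y *g l 1 x) = dd z.
    by rewrite (ph 1 ltac:(lia)) (homV (ph 1 ltac:(lia))) comp ?hz ?mulKg' //; lia.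
  have [w' hw'] := p1i _ (ex_intro _ z pw).
  by exists x, w'; rewrite -hw' mulKVg'.
- move=> x [z hz]; apply: q1i; exists (pp 2 z).
  by rewrite -comp ?hz ?pd //; lia.
- move=> j j1 j2; have [pinj psurj] := pks j j1 j2; have [qinj qsurj] := qks j j1 j2.
  split.
  + move=> x dx [z hz]; apply: qinj dx _; exists (pp j.+2 z).
    by rewrite -comp ?hz ?pd //; lia.
  + move=> y dy.
    have dpy : dd (pp j.+1 y) = gone.
      by rewrite -pd ?dy ?(hom1 (ph j ltac:(lia))) //; lia.
    have [x [dx [z hz]]] := qsurj _ dpy.
    have dw : dd (ginv y *g l j.+1 x) = gone.
      rewrite (hdd j ltac:(lia)) (homV (hdd j ltac:(lia))) -ld ?dx ?dy; last lia.
      by rewrite (hom1 (lh j ltac:(lia))) invg1' gmul1g.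
    have pw : pp j.+1 (ginv y *g l j.+1 x) = dd z.
      by rewrite (ph j.+1 ltac:(lia)) (homV (ph j.+1 ltac:(lia))) comp ?hz ?mulKg' //; lia.
    have [w' hw'] := pinj _ dw (ex_intro _ z pw).
    by exists x; split => //; exists w'; rewrite -hw' mulKVg'.
- move=> j hj; have [pinj psurj] := pn j hj; have [qinj qsurj] := qn j hj.
  split.
  + move=> x dx lx; apply: qinj dx _.
    by rewrite -comp ?lx ?(hom1 (ph j.+1 ltac:(lia))) //; lia.
  + move=> y dy.
    have dpy : dd (pp j.+1 y) = gone.
      by rewrite -pd ?dy ?(hom1 (ph j ltac:(lia))) //; lia.
    have [x [dx hx]] := qsurj _ dpy.
    have dw : dd (ginv y *g l j.+1 x) = gone.
      rewrite (hdd j ltac:(lia)) (homV (hdd j ltac:(lia))) -ld ?dx ?dy; last lia.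
      by rewrite (hom1 (lh j ltac:(lia))) invg1' gmul1g.
    have pw : pp j.+1 (ginv y *g l j.+1 x) = gone.
      by rewrite (ph j.+1 ltac:(lia)) (homV (ph j.+1 ltac:(lia))) comp ?hx ?gmulVg //; lia.
    have hw := pinj _ dw pw.
    exists x; split => //.
    by rewrite -(mulKVg' _ y (l j.+1 x)) hw mulg1'.
Qed.

Lemma rlow m k : k < m.+2 -> rtb m.+2 k = false.
Proof. by move=> h; rewrite /rtb; case: eqP => [e|]; [lia| rewrite andbF]. Qed.
Arguments rlow {m k} _.
Lemma rtop m : rtb m.+2 m.+2 = true.
Proof. by rewrite /rtb eqxx andbT. Qed.

Section EstarS.
Variables (m : nat) (H G E : cdata) (p : cmap E H) (f : cmap E G)
  (alpha : CC H m.+2 -> CC E m.+1) (beta : CC G m.+2 -> CC E m.+1).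
Set Implicit Arguments. Unset Strict Implicit.

Local Notation X := (Estar m.+2 H G E p f alpha beta).
Local Notation T := (prodg (CC H m.+2) (CC G m.+2)).
Local Notation ps := (pstar m.+2 H G E p f alpha beta).

Definition inL k (e : rtb m.+2 k = false) (x : CC E k) : CC X k :=
  castI (Y:=T) (X:=CC E k) e x.
Arguments inL {k} e x.
Definition inT (y : T) : CC X m.+2 := castT (Y:=T) (X:=CC E m.+2) (rtop m) y.

Lemma inL_all k (e : rtb m.+2 k = false) (P : CC X k -> Prop) :
  (forall x, P (inL e x)) -> forall y, P y.
Proof. exact: (castI_all e). Qed.
Arguments inL_all {k} e {P} _ y.
Lemma inT_all (P : CC X m.+2 -> Prop) : (forall x, P (inT x)) -> forall y, P y.
Proof. exact: (castT_all (rtop m)). Qed.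
Arguments inT_all {P} _ y.
Lemma inL_mul k (e : rtb m.+2 k = false) x y : inL e (x *g y) = inL e x *g inL e y.
Proof. exact: castI_mul. Qed.
Lemma inT_mul x y : inT (x *g y) = inT x *g inT y.
Proof. exact: castT_mul. Qed.
Lemma inL_one k (e : rtb m.+2 k = false) : inL e gone = gone.
Proof. exact: castI_one. Qed.
Lemma inT_one : inT gone = gone.
Proof. exact: castT_one. Qed.
Lemma inL_inv k (e : rtb m.+2 k = false) x : inL e (ginv x) = ginv (inL e x).
Proof. exact: castI_inv. Qed.
Lemma inL_inj k (e : rtb m.+2 k = false) x y : inL e x = inL e y -> x = y.
Proof. exact: castI_inj. Qed.
Lemma inT_inj x y : inT x = inT y -> x = y.
Proof. exact: castT_inj. Qed.
Lemma inL_irr k (e e' : rtb m.+2 k = false) x : inL e x = inL e' x.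
Proof. by rewrite (eq_irrelevance e e'). Qed.
Lemma inL1 (e : rtb m.+2 1 = false) x : inL e x = x.
Proof. exact: castI_ff. Qed.

Lemma dd_low k (e1 : rtb m.+2 k.+1 = false) (e0 : rtb m.+2 k = false) x :
  @dd X k (inL e1 x) = inL e0 (dd x).
Proof. exact: rd_low. Qed.
Lemma dd_top (e0 : rtb m.+2 m.+1 = false) y :
  @dd X m.+1 (inT y) = inL e0 (alpha y.1 *g beta y.2).
Proof. exact: rd_top. Qed.
Lemma act_low k (e : rtb m.+2 k = false) x a :
  @act X k (inL e x) a = inL e (act x a).
Proof. exact: ract_low. Qed.
Lemma act_top y a :
  @act X m.+2 (inT y) a = inT (act y.1 (p 1 a), act y.2 (f 1 a)).
Proof. exact: ract_top. Qed.
Lemma ps_low k (e : rtb m.+2 k = false) x : ps k (inL e x) = p k x.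
Proof. exact: rmap_low. Qed.
Lemma ps_top y : ps m.+2 (inT y) = y.1.
Proof. exact: rmap_top. Qed.
Lemma ps1 (a : CC X 1) : ps 1 a = p 1 a.
Proof. have e : rtb m.+2 1 = false by []. by rewrite -{1}(inL1 e a) ps_low. Qed.


Hypotheses (hm : 1 <= m) (hH : is_rcc m.+2 H) (hG : is_rcc m.+2 G)
  (hB : butterfly_aux m H G E p f alpha beta).

Lemma bcentral g (z : CC E m.+1) : beta g *g z = z *g beta g.
Proof.
have [hE [_ [_ [_ [_ [_ [_ [[_ [bker _]] _]]]]]]]] := hB.
have [_ [Eact [Ecm [Eab _]]]] := hE.
have [b1 _] := bker g.
have [m1|m2] : m = 1 \/ 2 <= m by lia.
- move: alpha beta hB z g b1 Eab Eact Ecm; rewrite m1 => al be _ z g b1 _ Eact Ecm.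
  have [Ecm1 Ecm2] := Ecm isT.
  have := Ecm2 z (be g); rewrite b1 (proj1 (Eact 2 isT)) => h.
  by rewrite {1}h -!gmulA mulKVg'.
- by apply: Eab; lia.
Qed.


Ltac dest :=
  have [hE [[phom [pdd pact]] [[fhom [fdd fact]] [ha [hb [pa_ [fb_ [[binj [bker [bex [um1 ulow]]]] [b3 [b3' [b4a b4b]]]]]]]]]]] := hB;
  have [Edh [Eact [Ecm [Eab [Eeq [Edd Etr]]]]]] := hE;
  have [Hdh [Hact [Hcm [Hab [Heq [Hdd Htr]]]]]] := hH;
  have [Gdh [Gact [Gcm [Gab [Geq [Gdd Gtr]]]]]] := hG;
  have e1 : rtb m.+2 1 = false by [];
  have e2 : rtb m.+2 2 = false by apply: rlow; lia.

Lemma X1 : forall k, 1 <= k < m.+2 -> hom (@dd X k).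
Proof.
dest.
move=> k hk.
have [lt|->] : k.+1 < m.+2 \/ k = m.+1 by lia.
- have lt0 : k < m.+2 by lia.
  move=> x y; move: x y; refine (inL_all (rlow lt) _) => x; refine (inL_all (rlow lt) _) => y.
  by rewrite -inL_mul !(dd_low (rlow lt) (rlow lt0)) (Edh k) ?inL_mul //; lia.
- move=> x y; move: x y; refine (inT_all _) => x; refine (inT_all _) => y.
  rewrite -inT_mul !(dd_top (rlow (ltnSn _))) -inL_mul; congr inL => /=.
  rewrite ha hb -!gmulA; congr (_ *g _).
  by rewrite [RHS]gmulA (bcentral x.2 (alpha y.1)) -gmulA.
Qed.

Lemma X2 : forall k, 2 <= k <= m.+2 ->
  (forall x : CC X k, act x gone = x) /\
  (forall (x : CC X k) (a b : CC X 1), act (act x a) b = act x (a *g b)) /\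
  (forall (x y : CC X k) (a : CC X 1), act (x *g y) a = act x a *g act y a).
Proof.
dest.
move=> k hk.
have [lt|->] : k < m.+2 \/ k = m.+2 by lia.
- have [A1 [A2 A3]] := Eact k ltac:(lia).
  split; [|split].
  + by refine (inL_all (rlow lt) _) => x; rewrite act_low A1.
  + by refine (inL_all (rlow lt) _) => x a b; rewrite !act_low A2.
  + refine (inL_all (rlow lt) _) => x; refine (inL_all (rlow lt) _) => y a.
    by rewrite -inL_mul !act_low A3 inL_mul.
- have [A1 [A2 A3]] := Hact m.+2 ltac:(lia).
  have [B1 [B2 B3]] := Gact m.+2 ltac:(lia).
  split; [|split].
  + refine (inT_all _) => x; rewrite act_top (hom1 (phom 1 ltac:(lia))) (hom1 (fhom 1 ltac:(lia))).
    by rewrite A1 B1; case: x.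
  + refine (inT_all _) => x a b; rewrite !act_top /= A2 B2.
    by rewrite (phom 1 ltac:(lia)) (fhom 1 ltac:(lia)).
  + refine (inT_all _) => x; refine (inT_all _) => y a.
    by rewrite -inT_mul !act_top -inT_mul /= A3 B3.
Qed.

Lemma X3 : 1 < m.+2 ->
     (forall (x : CC X 2) a, dd (act x a) = ginv a *g dd x *g a) /\
     (forall (x y : CC X 2), act x (dd y) = ginv y *g x *g y).
Proof.
dest.
move=> _; split.
- refine (inL_all e2 _) => x a.
  rewrite act_low !(dd_low e2 e1) !inL1.
  by have [C1 _] := Ecm ltac:(lia); rewrite C1.
- refine (inL_all e2 _) => x; refine (inL_all e2 _) => y.
  rewrite (dd_low e2 e1) inL1 act_low -!inL_inv -!inL_mul.
  by have [_ C2] := Ecm ltac:(lia); rewrite C2.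
Qed.

Lemma X4 : forall k, 3 <= k <= m.+2 -> forall x y : CC X k, x *g y = y *g x.
Proof.
dest.
move=> k hk.
have [lt|->] : k < m.+2 \/ k = m.+2 by lia.
- refine (inL_all (rlow lt) _) => x; refine (inL_all (rlow lt) _) => y.
  by rewrite -!inL_mul (Eab k _ x y) //; lia.
- refine (inT_all _) => x; refine (inT_all _) => y.
  rewrite -!inT_mul; congr inT; rewrite /= /prodg_mul.
  by congr (_, _); [apply: Hab | apply: Gab]; lia.
Qed.

Lemma X5 : forall k, 2 <= k < m.+2 -> forall (x : CC X k.+1) a,
      dd (act x a) = act (dd x) a.
Proof.
dest.
move=> k hk.
have [lt|->] : k.+1 < m.+2 \/ k = m.+1 by lia.
- have lt0 : k < m.+2 by lia.
  refine (inL_all (rlow lt) _) => x a.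
  by rewrite act_low !(dd_low (rlow lt) (rlow lt0)) act_low Eeq //; lia.
- refine (inT_all _) => x a.
  rewrite act_top !(dd_top (rlow (ltnSn _))) act_low /= b4a b4b.
  by have [_ [_ A3]] := Eact m.+1 ltac:(lia); rewrite A3.
Qed.

Lemma X6 : forall k, 1 <= k -> k.+2 <= m.+2 -> forall x : CC X k.+2,
      dd (dd x) = gone.
Proof.
dest.
move=> k hk1 hk2.
have [lt|->] : k.+2 < m.+2 \/ k = m by lia.
- have lt1 : k.+1 < m.+2 by lia.
  have lt0 : k < m.+2 by lia.
  refine (inL_all (rlow lt) _) => x.
  by rewrite (dd_low (rlow lt) (rlow lt1)) (dd_low (rlow lt1) (rlow lt0)) Edd ?inL_one //; lia.
- refine (inT_all _) => x.
  have lt1 : m.+1 < m.+2 by lia.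
  have lt0 : m < m.+2 by lia.
  by rewrite (dd_top (rlow lt1)) (dd_low (rlow lt1) (rlow lt0)) b3 inL_one.
Qed.

Lemma X7 : forall k, 3 <= k <= m.+2 -> forall (x : CC X k) (y : CC X 2),
      act x (dd y) = x.
Proof.
dest.
move=> k hk x; refine (inL_all e2 _) => y.
rewrite (dd_low e2 e1) inL1.
have [lt|eq] : k < m.+2 \/ k = m.+2 by lia.
- move: x; refine (inL_all (rlow lt) _) => x.
  by rewrite act_low Etr //; lia.
- subst k; move: x; refine (inT_all _) => x.
  rewrite act_top (pdd 1 ltac:(lia)) (fdd 1 ltac:(lia)).
  rewrite (Htr m.+2 ltac:(lia)) (Gtr m.+2 ltac:(lia)).
  by case: x.
Qed.

Lemma Xrcc : is_rcc m.+2 X.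
Proof.
split; [exact: X1|split; [exact: X2|split; [exact: X3|split; [exact: X4|split; [exact: X5|split; [exact: X6|exact: X7]]]]]].
Qed.

Lemma uget k : 1 <= k <= m.+1 -> u_surj E H p k.
Proof.
dest.
move=> hk; have [lt|->] : k <= m \/ k = m.+1 by lia.
- by apply: ulow; lia.
- exact: um1.
Qed.

Lemma p_surj k : 1 <= k <= m.+1 -> forall h : CC H k, exists x, p k x = h.
Proof.
dest.
case: k => [|[|i]] hk //.
- exact: (uget (k:=1)).
- move=> h.
  have U : u_surj E H p i.+2 := uget hk.
  have [e he] : exists e : CC E i.+1, (0 < i -> dd e = gone) /\ p i.+1 e = dd h.
    case: i hk U h => [|i] hk U h.
    + have [e he] := (uget (k:=1) isT) (dd h). by exists e.
    + have U' : u_surj E H p i.+2 := uget (k:=i.+2) ltac:(lia).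
      have c1 : 0 < i -> dd (gone : CC E i.+1) = gone.
        by move=> h0; apply: hom1; apply: Edh; lia.
      have c2 : p i.+1 gone = dd (dd h).
        rewrite (hom1 (phom i.+1 _)) ?(Hdd i.+1) //; lia.
      have [x [hx1 hx2]] := U' gone (dd h) c1 c2.
      by exists x.
  have [x [_ hx]] := U e h (proj1 he) (proj2 he).
  by exists x.
Qed.

Lemma ps_morph : is_morph m.+2 X H ps.
Proof.
dest.
split; [|split].
- move=> k hk.
  have [lt|->] : k < m.+2 \/ k = m.+2 by lia.
  + move=> x y; move: x y; refine (inL_all (rlow lt) _) => x; refine (inL_all (rlow lt) _) => y.
    by rewrite -inL_mul !ps_low (phom k) //; lia.
  + move=> x y; move: x y; refine (inT_all _) => x; refine (inT_all _) => y.
    by rewrite -inT_mul !ps_top.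
- move=> k hk.
  have [lt|->] : k.+1 < m.+2 \/ k = m.+1 by lia.
  + have lt0 : k < m.+2 by lia.
    refine (inL_all (rlow lt) _) => x.
    by rewrite (dd_low (rlow lt) (rlow lt0)) !ps_low pdd //; lia.
  + refine (inT_all _) => x.
    rewrite (dd_top (rlow (ltnSn _))) ps_low ps_top (phom m.+1 ltac:(lia)).
    by rewrite pa_ (proj2 (bker _)) mulg1'.
- move=> k hk.
  have [lt|->] : k < m.+2 \/ k = m.+2 by lia.
  + refine (inL_all (rlow lt) _) => x a.
    by rewrite act_low !ps_low ps1 pact //; lia.
  + refine (inT_all _) => x a.
    by rewrite act_top !ps_top ps1.
Qed.

Lemma ps_surj k : 1 <= k <= m.+2 -> forall y : CC H k, exists x, ps k x = y.
Proof.
move=> hk y.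
have [lt|eq] : k < m.+2 \/ k = m.+2 by lia.
- have [x hx] := p_surj (k:=k) ltac:(lia) y.
  by exists (inL (rlow lt) x); rewrite ps_low.
- subst k; exists (inT (y, gone)); by rewrite ps_top.
Qed.

Lemma ps_pi : pi_iso m.+2 X H ps.
Proof.
dest.
split; [split|split].
- move=> y; have [x hx] := p_surj (k:=1) isT y.
  exists (x : CC X 1), gone.
  by rewrite ps1 hx (hom1 (Hdh 1 isT)) mulg1'.
- move=> x [z hz]; rewrite ps1 in hz.
  have U : u_surj E H p 2 := uget (k:=2) ltac:(lia).
  have c : 0 < 0 -> @dd E 0 x = gone by [].
  have [w [hw1 hw2]] := U x z c hz.
  by exists (inL e2 w); rewrite (dd_low e2 e1) inL1.
- move=> j j1 j2; split.
  + have lt : j.+1 < m.+2 by lia.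
    refine (inL_all (rlow lt) _) => x.
    have lt0 : j < m.+2 by lia.
    rewrite (dd_low (rlow lt) (rlow lt0)) ps_low -(inL_one (rlow lt0)) => /inL_inj dx [z hz].
    have [lt2|eqj] : j.+2 < m.+2 \/ j = m by lia.
    * have U : u_surj E H p j.+2 := uget (k:=j.+2) ltac:(lia).
      have [w [hw1 hw2]] := U x z (fun _ => dx) hz.
      by exists (inL (rlow lt2) w); rewrite (dd_low (rlow lt2) (rlow lt)) hw1.
    * subst j.
      have da : dd (alpha z) = gone.
        by have := b3 z gone; rewrite (hom1 hb) mulg1'.
      have [g hg] : exists g, ginv (alpha z) *g x = beta g.
        apply: bex.
        - by rewrite (Edh m ltac:(lia)) (homV (Edh m ltac:(lia))) da dx invg1' gmul1g.
        - by rewrite (phom m.+1 ltac:(lia)) (homV (phom m.+1 ltac:(lia))) pa_ hz gmulVg.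
      exists (inT (z, g)).
      by rewrite (dd_top (rlow lt)) /= -hg mulKVg'.
  + move=> y dy.
    case: j j1 j2 y dy => [|i] // j1 j2 y dy.
    have U : u_surj E H p i.+2 := uget (k:=i.+2) ltac:(lia).
    have c1 : 0 < i -> dd (gone : CC E i.+1) = gone.
      by move=> h0; apply: hom1; apply: Edh; lia.
    have c2 : p i.+1 gone = dd y by rewrite dy (hom1 (phom i.+1 _)) //; lia.
    have [x [hx1 hx2]] := U gone y c1 c2.
    have lt : i.+2 < m.+2 by lia.
    have lt0 : i.+1 < m.+2 by lia.
    exists (inL (rlow lt) x); split.
    * by rewrite (dd_low (rlow lt) (rlow lt0)) hx1 inL_one.
    * exists gone.
      by rewrite ps_low hx2 (hom1 (Hdh i.+2 _)) ?mulg1' //; lia.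
- move=> j hj; case: hj => ->; split.
  + refine (inT_all _) => -[y1 y2].
    rewrite (dd_top (rlow (ltnSn _))) ps_top /= => hd h1.
    rewrite h1 (hom1 ha) gmul1g -(inL_one (rlow (ltnSn _))) in hd.
    have := binj _ (inL_inj hd) => ->.
    by rewrite h1; exact: inT_one.
  + move=> y dy.
    have [g hg] : exists g, alpha y = beta g.
      apply: bex.
      - by have := b3 y gone; rewrite (hom1 hb) mulg1'.
      - by rewrite pa_ dy.
    exists (inT (y, ginv g)); split.
    * by rewrite (dd_top (rlow (ltnSn _))) /= hg (homV hb) mulgV' inL_one.
    * by rewrite ps_top.
Qed.

End EstarS.

Theorem mainTheorem5 (n : nat) (hn : 3 <= n)
    (H G : cdata) (hH : is_rcc n H) (hG : is_rcc n G)
    (E : cdata) (p : cmap E H) (f : cmap E G)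
    (alpha : CC H n -> CC E n.-1) (beta : CC G n -> CC E n.-1)
    (hB : butterfly n H G E p f alpha beta)
    (Q : cdata) (q : cmap Q H)
    (hQ : is_rcc n Q) (hQc : cofibrant n Q) (hq : trivial_fibration n Q H q) :
  exists l : cmap Q (Estar n H G E p f alpha beta),
    weak_equiv n Q (Estar n H G E p f alpha beta) l /\
    (forall k, 1 <= k <= n -> forall x : CC Q k,
        pstar n H G E p f alpha beta k (l k x) = q k x).
Proof.
case: n hn hH hG alpha beta hB hQ hQc hq => [|[|m]] // hn hH hG alpha beta hB hQ hQc hq.
have hm : 1 <= m by lia.
have hB' : butterfly_aux m H G E p f alpha beta := hB.
have hX := Xrcc hm hH hG hB'.
have pm := ps_morph hm hH hG hB'.
have ppi := ps_pi hm hH hG hB'.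
have psu := ps_surj hm hH hG hB'.
have [[qm _] [_ qpi]] := hq.
have [l [lm lc]] := hQc _ _ hX hH _ (conj (conj pm psu) (conj pm ppi)) q qm.
exists l; split => //; split => //.
exact: (@two_of_three m.+2 isT _ _ _ hX _ _ _ lm pm ppi qpi lc).
Qed.
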